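(* Let $\widetilde{\Sigma}=\widetilde{\Sigma}_1\uplus\cdots\uplus\widetilde{\Sigma}_n$ with pairwise disjoint visibly pushdown alphabets, and let $P_1\subseteq\widetilde{\Sigma}_1^*,\ldots,P_n\subseteq\widetilde{\Sigma}_n^*$ be well-matched visibly pushdown languages. Let $\Sigma'\subseteq\Sigma^{\mathsf{call}}\cup\Sigma^{\mathsf{ret}}$ be such that for all $i$ and all $c,r\in\widetilde{\Sigma}_i$ that are a matching call–return pair in some word of $P_i$, $c\in\Sigma'\Leftrightarrow r\in\Sigma'$. Let $f:\widetilde{\Sigma}^*\to\widetilde{\Sigma}^*$ be a letter-to-letter string homomorphism with $f(a)\in\Sigma^{\mathsf{int}}_i$ if $a\in\Sigma'\cap\widetilde{\Sigma}_i$ (for any $i$), and $f(a)=a$ otherwise. If $\prec$ is a visibly pushdown contextual order on $\widetilde{\Sigma}$, then there is a visibly pushdown contextual order $\prec'$ such that $\mathrm{red}_{\prec'}(P_1\bowtie\cdots\bowtie P_n)=\mathrm{red}_{f(\prec)}(P_1\bowtie\cdots\bowtie P_n)$.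
   Context: A visibly pushdown (VP) alphabet is a finite alphabet partitioned into calls $\Sigma^{\mathsf{call}}$, returns $\Sigma^{\mathsf{ret}}$, internals $\Sigma^{\mathsf{int}}$; subscripts $i$ refer to $\widetilde{\Sigma}_i$, and $\widetilde{\Sigma}$ has the unions. Calls and returns are matched like opening and closing parentheses (internals ignored); a word is well-matched if all are matched. A visibly pushdown automaton (VPA) is a pushdown automaton with bottom symbol $\bot$ pushing one non-$\bot$ symbol on each call, popping the top on each return (reading $\bot$ on empty stack without removing it), stack unchanged on internals; deterministic = one initial state and at most one transition per configuration and letter; complete = at least one. Shuffle $P_1\parallel\cdots\parallel P_n=\{w:\Pi_{\widetilde{\Sigma}_i}(w)\in P_i\ \forall i\}$; a word is well-nested if every matched pair consists of letters from the same $\widetilde{\Sigma}_k$; $P_1\bowtie\cdots\bowtie P_n$ is the set of well-nested words of the shuffle. $\mathbb{I}=\{(a,b):a\in\widetilde{\Sigma}_i,b\in\widetilde{\Sigma}_j,i\ne j\}$, $\equiv_{\mathbb{I}}$ the least reflexive transitive relation with $uabv\equiv_{\mathbb{I}}ubav$ for $(a,b)\in\mathbb{I}$. A contextual order is a map $\prec$ from $\widetilde{\Sigma}^*$ to strict partial orders on $\widetilde{\Sigma}$; it induces $\preceq$: $\sigma\preceq\rho$ iff $\sigma$ is a prefix of $\rho$ or $\sigma=\alpha a\beta$, $\rho=\alpha b\gamma$ with $a\prec_\alpha b$. $\mathrm{red}_\prec(L)=\{w\in L:\forall u\in L,(u\equiv_{\mathbb{I}}w\wedge u\preceq w)\Rightarrow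 u=w\}$. A contextual order is visibly pushdown (VPO) if its values are strict total orders and there is a complete deterministic VPA $A$ over $\widetilde{\Sigma}$ and a map $\mathsf{ord}$ from states of $A$ to strict total orders with $\prec_w=\mathsf{ord}(q)$, $q$ the state reached after reading $w$. The contextual order $f(\prec)$ is defined by $a\ f(\prec)_w\ b\iff f(a)\prec_{f(w)}f(b)$. *)

(* Defs.v *)
From mathcomp Require Import all_boot.
Set Implicit Arguments. Unset Strict Implicit. Unset Printing Implicit Defensive.

Inductive vkind := VCall | VRet | VInt.

Definition is_call (k : vkind) : bool := if k is VCall then true else false.
Definition is_ret  (k : vkind) : bool := if k is VRet then true else false.
Definition is_int  (k : vkind) : bool := if k is VInt then true else false.

Section VP.
(* The global alphabet Sigma~, with the kind of each letter and the index
   of the component Sigma~_i it belongs to (so the Sigma~_i are pairwise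
   disjoint and their union is Sigma~). *)
Variable Sigma : finType.
Variable kind : Sigma -> vkind.

(* Nesting depth scan: None = an unmatched return occurred. *)
Definition depth_step (h : option nat) (a : Sigma) : option nat :=
  match h with
  | None => None
  | Some d => match kind a with
              | VCall => Some d.+1
              | VRet => if d is d'.+1 then Some d' else None
              | VInt => Some d
              end
  end.

Definition well_matched (w : seq Sigma) : bool :=
  foldl depth_step (Some 0) w == Some 0.

Definition matched_pair (w : seq Sigma) (x : Sigma) (p q : nat) : bool :=
  [&& p < q, q < size w, is_call (kind (nth x w p)), is_ret (kind (nth x w q))
    & well_matched (take (q - p.+1) (drop p.+1 w))].

(* (nondeterministic) visibly pushdown automaton over Sigma~; the stack
   alphabet G does not contain the bottom symbol, reading the bottom is
   represented by None. *)
Record VPA := {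
  vQ : finType;
  vG : finType;
  vInit : {set vQ};
  vFinal : {set vQ};
  vCall : vQ -> Sigma -> vQ -> vG -> bool;
  vRet : vQ -> option vG -> Sigma -> vQ -> bool;
  vInt : vQ -> Sigma -> vQ -> bool
}.

Definition vpa_step (A : VPA) (c : vQ A * seq (vG A)) (a : Sigma)
    (c' : vQ A * seq (vG A)) : Prop :=
  let: (q, s) := c in let: (q', s') := c' in
  match kind a with
  | VCall => exists g, vCall q a q' g /\ s' = g :: s
  | VRet => match s with
            | [::] => vRet q None a q' /\ s' = [::]
            | g :: s1 => vRet q (Some g) a q' /\ s' = s1
            end
  | VInt => vInt q a q' /\ s' = s
  end.

Fixpoint vpa_run (A : VPA) (c : vQ A * seq (vG A)) (w : seq Sigma)
    (c' : vQ A * seq (vG A)) : Prop :=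
  match w with
  | [::] => c = c'
  | a :: w' => exists c1, vpa_step c a c1 /\ vpa_run c1 w' c'
  end.

Definition vpa_accepts (A : VPA) (w : seq Sigma) : Prop :=
  exists q0 q s, q0 \in vInit A /\ q \in vFinal A /\ vpa_run (q0, [::]) w (q, s).

Definition VPL (L : seq Sigma -> Prop) : Prop :=
  exists A : VPA, forall w, L w <-> vpa_accepts A w.

Record DVPA := {
  dQ : finType;
  dG : finType;
  dInit : dQ;
  dCall : dQ -> Sigma -> dQ * dG;
  dRet : dQ -> option dG -> Sigma -> dQ;
  dInt : dQ -> Sigma -> dQ
}.

Definition dvpa_step (A : DVPA) (c : dQ A * seq (dG A)) (a : Sigma)
    : dQ A * seq (dG A) :=
  let: (q, s) := c in
  match kind a with
  | VCall => let: (q', g) := dCall q a in (q', g :: s)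
  | VRet => match s with
            | [::] => (dRet q None a, [::])
            | g :: s1 => (dRet q (Some g) a, s1)
            end
  | VInt => (dInt q a, s)
  end.

Definition dvpa_state (A : DVPA) (w : seq Sigma) : dQ A :=
  (foldl (@dvpa_step A) (dInit A, [::]) w).1.

Definition corder := seq Sigma -> rel Sigma.

Definition strict_total (r : rel Sigma) : Prop :=
  irreflexive r /\ transitive r /\ (forall a b, a != b -> r a b || r b a).

Definition VPO (ord : corder) : Prop :=
  (forall w, strict_total (ord w)) /\
  exists (A : DVPA) (omap : dQ A -> rel Sigma),
    forall w, ord w = omap (dvpa_state A w).

Definition cleq (ord : corder) (sigma rho : seq Sigma) : Prop :=
  prefix sigma rho \/
  exists alpha a b beta gamma,
    sigma = alpha ++ a :: beta /\ rho = alpha ++ b :: gamma /\ ord alpha a b.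

Variable n : nat.
Variable comp : Sigma -> 'I_n.

Definition indep (a b : Sigma) : bool := comp a != comp b.

Inductive trace_eq : seq Sigma -> seq Sigma -> Prop :=
| te_refl w : trace_eq w w
| te_trans u v w : trace_eq u v -> trace_eq v w -> trace_eq u w
| te_swap u a b v : indep a b -> trace_eq (u ++ a :: b :: v) (u ++ b :: a :: v).

Definition red (ord : corder) (L : seq Sigma -> Prop) (w : seq Sigma) : Prop :=
  L w /\ forall u, L u -> trace_eq u w -> cleq ord u w -> u = w.

Definition proj (i : 'I_n) (w : seq Sigma) : seq Sigma :=
  [seq a <- w | comp a == i].

Definition in_comp (i : 'I_n) (w : seq Sigma) : bool := all (fun a => comp a == i) w.

Definition well_nested (w : seq Sigma) : Prop :=
  forall x p q, matched_pair w x p q -> comp (nth x w p) = comp (nth x w q).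

Definition shuffle (P : 'I_n -> seq Sigma -> Prop) (w : seq Sigma) : Prop :=
  forall i, P i (proj i w).

Definition bowtie (P : 'I_n -> seq Sigma -> Prop) (w : seq Sigma) : Prop :=
  shuffle P w /\ well_nested w.

Definition corder_map (f : Sigma -> Sigma) (ord : corder) : corder :=
  fun w a b => ord (map f w) (f a) (f b).

End VP.

(* Main.v *)
Require Import Defs.
From mathcomp Require Import all_boot zify.
Set Implicit Arguments. Unset Strict Implicit. Unset Printing Implicit Defensive.

Section WM.
Variable Sigma : finType.
Variable kind : Sigma -> vkind.
Notation ds := (depth_step kind).
Notation wm := (well_matched kind).

Lemma foldl_none u : foldl ds None u = None.
Proof. by elim: u. Qed.

Lemma ds_shift u : forall m e d, foldl ds (Some m) u = Some e ->
  foldl ds (Some (d + m)) u = Some (d + e).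
Proof.
elim: u => [|a u IH] m e d /=; first by case=> ->.
rewrite /depth_step; case: (kind a) => /=.
- by move=> H; rewrite -addnS; apply: IH.
- case: m => [|m]; first by rewrite foldl_none.
  by move=> H; rewrite addnS; apply: IH.
- exact: IH.
Qed.

Lemma wm_nil : wm [::].
Proof. by []. Qed.

Lemma wm_cat u v : wm u -> wm v -> wm (u ++ v).
Proof. by rewrite /well_matched foldl_cat => /eqP -> . Qed.

Lemma wm_int a u : kind a = VInt -> wm u -> wm (a :: u).
Proof. by rewrite /well_matched /= /depth_step => ->. Qed.

Lemma wm_block c u r : kind c = VCall -> kind r = VRet -> wm u ->
  wm (c :: u ++ [:: r]).
Proof.
rewrite /well_matched /= {1}/depth_step => -> Hr /eqP Hu.
rewrite foldl_cat (ds_shift 1 Hu) /= /depth_step Hr //.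
Qed.

Lemma wm_ret a u : kind a = VRet -> ~~ wm (a :: u).
Proof. by rewrite /well_matched /= /depth_step => ->; rewrite foldl_none. Qed.

Lemma wm_int_inv a u : kind a = VInt -> wm (a :: u) -> wm u.
Proof. by rewrite /well_matched /= /depth_step => ->. Qed.

Lemma FR_gen n : forall t d, size t <= n -> foldl ds (Some d.+1) t = Some 0 ->
  exists u r v, [/\ t = u ++ r :: v, wm u, kind r = VRet &
                    foldl ds (Some d) v = Some 0].
Proof.
elim: n => [|n IH] [|a t] d //=.
rewrite ltnS => Hs; rewrite {1}/depth_step; case Ha: (kind a) => H.
- have [u' [r' [v' [E1 Hu' Hr' Hv']]]] := IH t d.+1 Hs H.
  have Hsv : size v' <= n.
    by apply: leq_trans Hs; rewrite E1 size_cat /= addnS ltnW // ltnS leq_addl.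
  have [u'' [r'' [v'' [E2 Hu'' Hr'' Hv'']]]] := IH v' d Hsv Hv'.
  exists (a :: u' ++ r' :: u''), r'', v''; split => //.
  + by rewrite E1 E2 /= -catA.
  + have -> : a :: u' ++ r' :: u'' = (a :: u' ++ [:: r']) ++ u'' by rewrite /= -catA.
    by apply: wm_cat => //; apply: wm_block.
- by exists [::], a, t.
- have [u' [r' [v' [E1 Hu' Hr' Hv']]]] := IH t d Hs H.
  exists (a :: u'), r', v'; split => //; first by rewrite E1.
  exact: wm_int.
Qed.

Lemma FR c t : kind c = VCall -> wm (c :: t) ->
  exists u r v, [/\ t = u ++ r :: v, wm u, kind r = VRet & wm v].
Proof.
move=> Hc; rewrite /well_matched /= /depth_step Hc => /eqP H.
have [u [r [v [E Hu Hr Hv]]]] := FR_gen (leqnn _) H.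
by exists u, r, v; split => //; apply/eqP.
Qed.

End WM.

Section MPs.
Variable Sigma : finType.
Variable kind : Sigma -> vkind.
Variable n : nat.
Variable comp : Sigma -> 'I_n.
Notation wm := (well_matched kind).

Lemma nth_pre (x : Sigma) pre c rest : nth x (pre ++ c :: rest) (size pre) = c.
Proof. by rewrite nth_cat ltnn subnn. Qed.

Lemma MP pre c mid r post (x : Sigma) : kind c = VCall -> kind r = VRet -> wm mid ->
  let w := pre ++ c :: mid ++ r :: post in
  [/\ matched_pair kind w x (size pre) (size pre + (size mid).+1),
      nth x w (size pre) = c & nth x w (size pre + (size mid).+1) = r].
Proof.
move=> Hc Hr Hm w.
have E1 : nth x w (size pre) = c by rewrite /w nth_pre.
have E2 : nth x w (size pre + (size mid).+1) = r.
  by rewrite /w nth_cat ltnNge leq_addr /= addKn /= nth_pre.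
split => //; rewrite /matched_pair E1 E2 Hc Hr /=.
have H1 : size pre < size pre + (size mid).+1 by lia.
have H2 : size pre + (size mid).+1 < size w.
  by rewrite /w !size_cat /= size_cat /=; lia.
have -> : size pre + (size mid).+1 - (size pre).+1 = size mid by lia.
rewrite H1 H2 /= /w drop_cat ltnNge leqnSn /= subSn // subnn /= drop0 take_size_cat //.
Qed.

Lemma proj_cat i (u v : seq Sigma) : proj comp i (u ++ v) = proj comp i u ++ proj comp i v.
Proof. exact: filter_cat. Qed.

Lemma proj_cons i (a : Sigma) u :
  proj comp i (a :: u) = if comp a == i then a :: proj comp i u else proj comp i u.
Proof. by []. Qed.

Lemma W_gen N : forall mid, size mid <= N -> wm mid -> forall pre post,
  well_nested kind comp (pre ++ mid ++ post) -> forall i, wm (proj comp i mid).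
Proof.
elim: N => [|N IH] [|a t] //= Hs Hw pre post Hn i.
case Ha: (kind a).
- have [u [r [v [E Hu Hr Hv]]]] := FR Ha Hw.
  subst t.
  have Hwn : well_nested kind comp (pre ++ a :: u ++ r :: (v ++ post)).
    by move: Hn; rewrite /= -catA.
  have [Hmp E1 E2] := MP pre (v ++ post) a Ha Hr Hu.
  have := Hwn a _ _ Hmp; rewrite E1 E2 => Hcomp.
  rewrite size_cat /= in Hs.
  have Hpu : wm (proj comp i u).
    apply: (IH u _ Hu (rcons pre a) (r :: v ++ post)).
      by lia.
    by rewrite cat_rcons.
  have Hpv : wm (proj comp i v).
    apply: (IH v _ Hv (pre ++ a :: u ++ [:: r]) post).
      by lia.
    by move: Hwn; rewrite -!catA /= -!catA.
  rewrite proj_cat proj_cons -Hcomp.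
  case: (comp a == i).
  + have -> : a :: proj comp i u ++ r :: proj comp i v =
              (a :: proj comp i u ++ [:: r]) ++ proj comp i v by rewrite /= -catA.
    by apply: wm_cat => //; apply: wm_block.
  + exact: wm_cat.
- by move: Hw; rewrite (negbTE (wm_ret _ Ha)).
- have Ht := wm_int_inv Ha Hw.
  have Hpt : wm (proj comp i t).
    by apply: (IH t Hs Ht (rcons pre a) post); rewrite cat_rcons.
  case: (comp a == i) => //; exact: wm_int.
Qed.

End MPs.

Section Pend.
Variable Sigma : finType.
Variable kind : Sigma -> vkind.
Variable n : nat.
Variable comp : Sigma -> 'I_n.
Notation wm := (well_matched kind).

Definition pend (st : seq Sigma) (a : Sigma) :=
  match kind a with VCall => a :: st | VRet => behead st | VInt => st end.

Lemma pend_split N : forall alpha, size alpha <= N -> forall c st,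
  foldl pend [::] alpha = c :: st ->
  exists alpha1 mid, [/\ alpha = alpha1 ++ c :: mid, kind c = VCall, wm mid &
                        foldl pend [::] alpha1 = st].
Proof.
elim: N => [|N IH] alpha; case/lastP: alpha => [|alpha a] //=; rewrite ?size_rcons //.
rewrite ltnS => Hs c st; rewrite foldl_rcons /pend; case Ha: (kind a).
- by case=> <- <-; exists alpha, [::]; split => //; rewrite cats1.
- case E: (foldl pend [::] alpha) => [|c' st0] //= Est; subst st0.
  have [alpha1' [mid' [E1 Hc' Hm' Hp']]] := IH alpha Hs _ _ E.
  have Hs1 : size alpha1' <= N by apply: leq_trans Hs; rewrite E1 size_cat leq_addr.
  have [alpha1 [mid'' [E2 Hc Hm'' Hp]]] := IH alpha1' Hs1 _ _ Hp'.
  exists alpha1, (mid'' ++ c' :: mid' ++ [:: a]); split => //.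
  + by rewrite -cats1 E1 E2 -!catA.
  + by apply: wm_cat => //; apply: wm_block.
- move=> E.
  have [alpha1 [mid [E1 Hc Hm Hp]]] := IH alpha Hs _ _ E.
  exists alpha1, (rcons mid a); split => //.
  + by rewrite E1 rcons_cat.
  + by rewrite -cats1; apply: wm_cat => //; apply: wm_int.
Qed.

Lemma goodC (P : 'I_n -> seq Sigma -> Prop) (S' : pred Sigma)
  (HS : forall i w x p q, P i w -> matched_pair kind w x p q ->
          S' (nth x w p) = S' (nth x w q)) w :
  bowtie kind comp P w -> forall alpha1 c mid r rest,
  w = alpha1 ++ c :: mid ++ r :: rest -> kind c = VCall -> kind r = VRet -> wm mid ->
  S' c = S' r.
Proof.
move=> [Hsh Hwn] alpha1 c mid r rest Ew Hc Hr Hm; subst w.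
have [Hmp E1 E2] := MP alpha1 rest c Hc Hr Hm.
have := Hwn c _ _ Hmp; rewrite E1 E2 => Hcomp.
set i := comp c.
have Hpm : wm (proj comp i mid).
  apply: (W_gen (leqnn _) Hm (pre := rcons alpha1 c) (post := r :: rest)).
  by rewrite cat_rcons.
have Hpw : proj comp i (alpha1 ++ c :: mid ++ r :: rest) =
   proj comp i alpha1 ++ c :: proj comp i mid ++ r :: proj comp i rest.
  by rewrite proj_cat proj_cons eqxx proj_cat proj_cons -Hcomp eqxx.
have [Hmp' E1' E2'] := MP (proj comp i alpha1) (proj comp i rest) c Hc Hr Hpm.
move: (Hsh i); rewrite Hpw => Hsh'.
by have := HS i _ c _ _ Hsh' Hmp'; rewrite E1' E2'.
Qed.

Fixpoint goodrun (S' : pred Sigma) (P : seq Sigma) (w : seq Sigma) : Prop :=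
  match w with
  | [::] => True
  | a :: t => (kind a = VRet -> forall c st, P = c :: st -> S' c = S' a) /\
              goodrun S' (pend P a) t
  end.

Lemma goodrun_of S' t : forall pre,
  (forall alpha a rest c st, pre ++ t = alpha ++ a :: rest -> kind a = VRet ->
     foldl pend [::] alpha = c :: st -> S' c = S' a) ->
  goodrun S' (foldl pend [::] pre) t.
Proof.
elim: t => [|a t IH] pre H; first by [].
split.
  by move=> Ha c st E; apply: (H pre a t c st).
have -> : pend (foldl pend [::] pre) a = foldl pend [::] (rcons pre a) by rewrite foldl_rcons.
apply: IH => alpha b rest c st E; apply: (H alpha b rest c st) => //.
by rewrite -E cat_rcons.
Qed.

Lemma goodrun_cat S' u : forall P v, goodrun S' P (u ++ v) -> goodrun S' P u.
Proof. by elim: u => [|a u IH] P v //= [H1 H2]; split => //; apply: IH H2. Qed.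

Lemma bowtie_good (P : 'I_n -> seq Sigma -> Prop) (S' : pred Sigma)
  (HS : forall i w x p q, P i w -> matched_pair kind w x p q ->
          S' (nth x w p) = S' (nth x w q)) w :
  bowtie kind comp P w -> goodrun S' [::] w.
Proof.
move=> Hb; apply: (goodrun_of (pre := [::])) => alpha a rest c st /= Ew Ha Hp.
have [alpha1 [mid [E1 Hc Hm _]]] := pend_split (leqnn _) Hp.
apply: (goodC HS Hb (alpha1 := alpha1) (mid := mid) (rest := rest)) => //.
by rewrite Ew E1 -catA.
Qed.

End Pend.

Section Sim.
Variable Sigma : finType.
Variable kind : Sigma -> vkind.
Variable S' : pred Sigma.
Variable f : Sigma -> Sigma.
Hypothesis HS'cr : forall a, S' a -> is_call (kind a) || is_ret (kind a).
Hypothesis Hf_in : forall a, S' a -> is_int (kind (f a)).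
Hypothesis Hf_out : forall a, ~~ S' a -> f a = a.
Variable A : DVPA Sigma.

Definition simA : DVPA Sigma :=
  @Build_DVPA Sigma (dQ A) [the finType of option (dG A)] (dInit A)
    (fun q c => if S' c then (dInt q (f c), None)
                else let: (q', g) := dCall q c in (q', Some g))
    (fun q t r => if S' r then dInt q (f r)
                  else match t with Some (Some g) => dRet q (Some g) r
                                  | _ => dRet q None r end)
    (fun q a => dInt q (f a)).

Definition Rel (c' : dQ A * seq (option (dG A))) (P : seq Sigma) (c : dQ A * seq (dG A)) :=
  [/\ c'.1 = c.1, c.2 = pmap id c'.2 & map (fun o => o == None) c'.2 = map S' P].

Lemma kind_fS a : S' a -> kind (f a) = VInt.
Proof. by move/Hf_in; case: (kind (f a)). Qed.

Lemma sim_step c' P c a : Rel c' P c ->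
  (kind a = VRet -> forall x st, P = x :: st -> S' x = S' a) ->
  Rel (@dvpa_step _ kind simA c' a) (pend kind P a) (dvpa_step kind c (f a)).
Proof.
case: c' => q' s'; case: c => q s [/= <- -> Hm] Hg.
case HSa: (S' a).
- have Hfa := kind_fS HSa.
  rewrite /dvpa_step Hfa /pend /=.
  case Ha: (kind a) => /=.
  + by split => //=; rewrite Hm HSa.
  + case: s' Hm => [|o s1]; case: P Hg => [|x st] Hg //= Hm.
    case: Hm => Ho Hm; split => //.
    have := Hg Ha x st (erefl _); rewrite HSa -Ho.
    by case: o Ho.
  + by move: (HS'cr HSa); rewrite Ha.
- have Hfa : f a = a by apply: Hf_out; rewrite HSa.
  rewrite Hfa /dvpa_step /pend /=.
  case Ha: (kind a) => /=.
  + case: (dCall q' a) => q2 g /=; split => //=.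
    by rewrite Hm ?HSa.
  + case: s' Hm => [|o s1]; case: P Hg => [|x st] Hg //= Hm.
    case: Hm => Ho Hm.
    have := Hg Ha x st (erefl _); rewrite HSa -Ho.
    by case: o Ho => // g _ _ /=; rewrite ?HSa; split.
  + by split.
Qed.

Lemma sim_run alpha : forall c' P c, Rel c' P c -> goodrun kind S' P alpha ->
  Rel (foldl (@dvpa_step _ kind simA) c' alpha) (foldl (pend kind) P alpha)
      (foldl (@dvpa_step _ kind A) c (map f alpha)).
Proof.
elim: alpha => [|a t IH] c' P c HR //= [Hg1 Hg2].
by apply: IH => //; apply: sim_step.
Qed.

Lemma sim_state alpha : goodrun kind S' [::] alpha ->
  dvpa_state kind simA alpha = dvpa_state kind A (map f alpha).
Proof.
move=> Hg; rewrite /dvpa_state.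
have [] := @sim_run alpha (dInit A, [::]) [::] (dInit A, [::]) _ Hg => //.
Qed.

End Sim.

Section Tr.
Variable Sigma : finType.
Variable n : nat.
Variable comp : Sigma -> 'I_n.

Lemma te_proj u w : trace_eq comp u w -> forall i, proj comp i u = proj comp i w.
Proof.
elim=> [//|u1 v1 w1 _ H1 _ H2 i|u1 a b v Hab i]; first by rewrite H1 H2.
rewrite !proj_cat !proj_cons.
case Ea: (comp a == i); case Eb: (comp b == i) => //.
by move: Hab; rewrite /indep (eqP Ea) (eqP Eb) eqxx.
Qed.

Lemma cat_cancel (alpha x y : seq Sigma) : alpha ++ x = alpha ++ y -> x = y.
Proof. by elim: alpha => // a al IH [] /IH. Qed.

Lemma diverge u w alpha a b beta gamma : trace_eq comp u w ->
  u = alpha ++ a :: beta -> w = alpha ++ b :: gamma -> comp a = comp b -> a = b.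
Proof.
move=> Ht Eu Ew Hc.
have := te_proj Ht (comp a); rewrite Eu Ew !proj_cat !proj_cons eqxx Hc eqxx.
by move/cat_cancel => [].
Qed.

End Tr.

Section Lex.
Variable Sigma : finType.
Variable f : Sigma -> Sigma.

Definition stb (R : rel Sigma) : bool :=
  [&& [forall a, ~~ R a a], [forall a, forall b, forall c, R a b ==> R b c ==> R a c] &
      [forall a, forall b, (a != b) ==> R a b || R b a]].

Lemma stb_st R : stb R -> strict_total R.
Proof.
case/and3P => /forallP H1 /forallP H2 /forallP H3; split; [|split].
- by move=> a; apply/negbTE/H1.
- move=> y x z Hxy Hyz.
  by move: (H2 x) => /forallP /(_ y) /forallP /(_ z) /implyP /(_ Hxy) /implyP /(_ Hyz).
- by move=> a b Hab; move: (H3 a) => /forallP /(_ b) /implyP /(_ Hab).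
Qed.

Lemma st_stb R : strict_total R -> stb R.
Proof.
case=> H1 [H2 H3]; apply/and3P; split.
- by apply/forallP => a; rewrite H1.
- apply/forallP => a; apply/forallP => b; apply/forallP => c.
  by apply/implyP => Hab; apply/implyP => Hbc; apply: H2 Hbc.
- by apply/forallP => a; apply/forallP => b; apply/implyP => Hab; apply: H3.
Qed.

Definition lexo (R : rel Sigma) : rel Sigma :=
  if stb R then fun a b => R (f a) (f b) || (f a == f b) && (enum_rank a < enum_rank b)%N
  else fun a b => (enum_rank a < enum_rank b)%N.

Lemma lexo_st R : strict_total (lexo R).
Proof.
rewrite /lexo; case E: (stb R); last first.
  split; [|split].
  - by move=> a; rewrite ltnn.
  - by move=> y x z; apply: ltn_trans.
  - move=> a b Hab; rewrite -neq_ltn; apply/negP => /eqP /val_inj /enum_rank_inj Eab.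
    by rewrite Eab eqxx in Hab.
have [H1 [H2 H3]] := stb_st E; split; [|split].
- by move=> a; rewrite H1 ltnn andbF.
- move=> y x z /orP[Hxy|/andP[/eqP Exy Hxy]] /orP[Hyz|/andP[/eqP Eyz Hyz]]; apply/orP.
  + by left; apply: H2 Hyz.
  + by left; rewrite -Eyz.
  + by left; rewrite Exy.
  + by right; rewrite Exy Eyz eqxx (ltn_trans Hxy Hyz).
- move=> a b Hab; case Ef: (f a == f b).
  + have : (enum_rank a : nat) != enum_rank b.
      by apply/negP => /eqP /val_inj /enum_rank_inj Eab; rewrite Eab eqxx in Hab.
    by rewrite neq_ltn => /orP[H|H]; apply/orP; [left|right]; apply/orP; right;
       rewrite ?H ?andbT // eq_sym.
  + have := H3 (f a) (f b); rewrite Ef => /(_ isT) /orP[H|H]; apply/orP; [left|right];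
    by rewrite H.
Qed.

Lemma lexo_eq R a b : strict_total R -> f a != f b -> lexo R a b = R (f a) (f b).
Proof. by move=> /st_stb Hs Hf; rewrite /lexo Hs (negbTE Hf) orbF. Qed.

End Lex.

Theorem proposition6p3
  (Sigma : finType) (kind : Sigma -> vkind) (n : nat) (comp : Sigma -> 'I_n)
  (P : 'I_n -> seq Sigma -> Prop)
  (* P_i is a language over Sigma~_i *)
  (HPsub : forall i w, P i w -> in_comp comp i w)
  (* P_i is a visibly pushdown language *)
  (HPvpl : forall i, VPL kind (P i))
  (* P_i is well-matched *)
  (HPwm : forall i w, P i w -> well_matched kind w)
  (Sigma' : pred Sigma)
  (HS'cr : forall a, Sigma' a -> is_call (kind a) || is_ret (kind a))
  (HS'match : forall i w x p q, P i w -> matched_pair kind w x p q ->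
                Sigma' (nth x w p) = Sigma' (nth x w q))
  (f : Sigma -> Sigma)
  (Hf_in : forall a, Sigma' a -> is_int (kind (f a)) /\ comp (f a) = comp a)
  (Hf_out : forall a, ~~ Sigma' a -> f a = a)
  (ord : corder Sigma)
  (Hord : VPO kind ord) :
  exists ord' : corder Sigma,
    VPO kind ord' /\
    forall w, red comp ord' (bowtie kind comp P) w <->
              red comp (corder_map f ord) (bowtie kind comp P) w.
Proof.
case: Hord => Hst [A [omap Hom]].
have Hf_in1 : forall a, Sigma' a -> is_int (kind (f a)) by move=> a /Hf_in [].
pose A' := simA Sigma' f A.
pose ord' : corder Sigma := fun w => lexo f (omap (dvpa_state kind A' w)).
have Hcf : forall a, comp (f a) = comp a.
  move=> a; case Ha: (Sigma' a); first by case: (Hf_in a Ha).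
  by rewrite Hf_out // Ha.
have Hst' : forall w, strict_total (ord' w) by move=> w; apply: lexo_st.
have key : forall u w alpha a b beta gamma,
    bowtie kind comp P w -> trace_eq comp u w ->
    u = alpha ++ a :: beta -> w = alpha ++ b :: gamma ->
    ord' alpha a b = corder_map f ord alpha a b.
  move=> u w alpha a b beta gamma Lw Ht Eu Ew.
  case Eab: (a == b).
    rewrite (eqP Eab) /corder_map.
    by have [-> _] := Hst' alpha; have [-> _] := Hst (map f alpha).
  have Hc : comp a != comp b.
    by apply/negP => /eqP Hc; move: (diverge Ht Eu Ew Hc) => /eqP; rewrite Eab.
  have Hfab : f a != f b by apply: contraNneq Hc => E; rewrite -Hcf E Hcf.
  have Hg : goodrun kind Sigma' [::] alpha.
    apply: (goodrun_cat (v := b :: gamma)); rewrite -Ew.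
    exact: (bowtie_good HS'match Lw).
  by rewrite /ord' /A' (sim_state HS'cr Hf_in1 Hf_out A Hg) -Hom lexo_eq.
exists ord'; split.
  split => //; exists A', (fun q => lexo f (omap q)); by [].
move=> w; split => -[Lw H]; split => // u Lu Ht Hcl; apply: H => //; move: Hcl.
- case=> [Hp|[al [a [b [be [ga [E1 [E2 Ho]]]]]]]]; [by left|right].
  by exists al, a, b, be, ga; split => //; rewrite (key u w al a b be ga).
- case=> [Hp|[al [a [b [be [ga [E1 [E2 Ho]]]]]]]]; [by left|right].
  by exists al, a, b, be, ga; split => //; rewrite -(key u w al a b be ga).
Qed.
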